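(* For any stationary process over a finite alphabet and every $L\ge2$, $$h'_\mu(L)-h_\mu(L)\ \ge\ \frac{\mathbf{E}'(L)}{L}.$$
   Context: $H(L)$ is the Shannon entropy (base 2) of $S_1\cdots S_L$, $H(0)=0$; $h_\mu(L)=H(L)-H(L-1)$; $h'_\mu(L)=H(L)/L$. For even $L$, $\mathbf{E}'(L)=I[S_1\cdots S_{L/2};\,S_{L/2+1}\cdots S_L]$ (mutual information between the two halves of an $L$-block); for odd $L$, $\mathbf{E}'(L)=\mathbf{E}'(L-1)$. *)

(* Defs.v *)
From mathcomp Require Import all_boot all_order all_algebra.
From mathcomp Require Import reals exp.
Set Implicit Arguments. Unset Strict Implicit. Unset Printing Implicit Defensive.
Import Order.TTheory GRing.Theory Num.Theory.
Local Open Scope ring_scope.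

Section Entropy.
Variables (R : realType) (A : finType).

(* A process over A is given by its family of finite-dimensional block
   distributions: blk L w = Pr[S_1 ... S_L = w]. *)
Definition blocks := forall L : nat, L.-tuple A -> R.

Definition stationary_process (blk : blocks) : Prop :=
  [/\ forall L (w : L.-tuple A), 0 <= blk L w,
      blk 0 [tuple] = 1,
      forall L (w : L.-tuple A), blk L w = \sum_(a : A) blk L.+1 [tuple of rcons w a]
    & (* stationarity: marginalizing the first symbol gives the same law *)
      forall L (w : L.-tuple A), blk L w = \sum_(a : A) blk L.+1 [tuple of a :: w]].

Definition log2 (x : R) : R := ln x / ln 2.

Definition xlog2x (x : R) : R := if x == 0 then 0 else x * log2 x.

Definition block_entropy (blk : blocks) (L : nat) : R :=
  - \sum_(w : L.-tuple A) xlog2x (blk L w).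

Definition entropy_rate_est (blk : blocks) (L : nat) : R :=
  block_entropy blk L - block_entropy blk L.-1.

Definition entropy_rate_est' (blk : blocks) (L : nat) : R :=
  block_entropy blk L / L%:R.

Definition halves_mutual_info (blk : blocks) (m : nat) : R :=
  let pxy := fun (x y : m.-tuple A) => blk (m + m)%N [tuple of x ++ y] in
  \sum_(x : m.-tuple A) \sum_(y : m.-tuple A)
     (if pxy x y == 0 then 0
      else pxy x y * log2 (pxy x y /
             ((\sum_(y' : m.-tuple A) pxy x y') * (\sum_(x' : m.-tuple A) pxy x' y)))).

(* E'(L): for even L the mutual information between the two halves of the
   L-block; for odd L, E'(L) = E'(L-1).  In both cases the half length is L./2. *)
Definition excess_entropy_est' (blk : blocks) (L : nat) : R :=
  halves_mutual_info blk L./2.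

End Entropy.

(* Main.v *)
Require Import Defs.
From mathcomp Require Import all_boot all_order all_algebra.
From mathcomp Require Import reals exp.
From mathcomp Require Import lra ring zify.
Set Implicit Arguments. Unset Strict Implicit. Unset Printing Implicit Defensive.
Import Order.TTheory GRing.Theory Num.Theory.
Local Open Scope ring_scope.

Section Aux.
Variables (R : realType) (A : finType).

Lemma sum_tuple_cons n (F : seq A -> R) :
  \sum_(t : n.+1.-tuple A) F t = \sum_(a : A) \sum_(t : n.-tuple A) F (a :: t).
Proof.
rewrite pair_big /=.
rewrite (reindex (fun p : A * n.-tuple A => [tuple of p.1 :: p.2])) /=.
  by [].
exists (fun t : n.+1.-tuple A => (thead t, [tuple of behead t])).
  by move=> [a t] _; congr pair; apply: val_inj.
move=> t _; apply: val_inj => /=. by case: t => [[|a s] //=].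
Qed.

Lemma sum_tuple_rev n (F : seq A -> R) :
  \sum_(t : n.-tuple A) F t = \sum_(t : n.-tuple A) F (rev t).
Proof.
rewrite (reindex_inj (h := fun t : n.-tuple A => [tuple of rev t])) /=; first by [].
move=> s t H; have := congr1 (fun u : n.-tuple A => rev (val u)) H.
by rewrite /= !revK => ?; apply: val_inj.
Qed.

Lemma sum_tuple_rcons n (F : seq A -> R) :
  \sum_(t : n.+1.-tuple A) F t = \sum_(t : n.-tuple A) \sum_(a : A) F (rcons t a).
Proof.
rewrite sum_tuple_rev (sum_tuple_cons n (fun s => F (rev s))) [RHS]exchange_big /=.
apply: eq_bigr => a _.
rewrite [RHS](sum_tuple_rev n (fun s => F (rcons s a))) /=.
by apply: eq_bigr => t _; rewrite rev_cons.
Qed.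

Lemma sum_tuple0 (F : seq A -> R) : \sum_(t : 0.-tuple A) F t = F [::].
Proof. by rewrite (big_pred1 [tuple]) // => t; apply/esym/eqP; exact: tuple0. Qed.

Lemma sum_tuple_cat m k (F : seq A -> R) :
  \sum_(t : (m + k).-tuple A) F t =
  \sum_(x : m.-tuple A) \sum_(y : k.-tuple A) F (x ++ y).
Proof.
elim: m F => [|m IH] F.
  by rewrite (sum_tuple0 (fun s => \sum_(y : k.-tuple A) F (s ++ y))).
transitivity (\sum_(t : (m+k).+1.-tuple A) F t); first by [].
rewrite sum_tuple_cons (sum_tuple_cons m (fun s => \sum_(y : k.-tuple A) F (s ++ y))).
by apply: eq_bigr => a _; rewrite (IH (fun s => F (a :: s))).
Qed.


Definition xl (u : R) : R := u * @ln R u.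

Lemma ln_le_sub1 (x : R) : 0 < x -> ln x <= x - 1.
Proof. move=> x0; have := expR_ge1Dx (ln x); rewrite lnK ?posrE //; lra. Qed.

Lemma sum_ge_term (I : finType) (F : I -> R) i :
  (forall j, 0 <= F j) -> F i <= \sum_j F j.
Proof.
move=> F0; rewrite (bigD1 i) //= lerDl; exact: sumr_ge0.
Qed.

Section Gibbs.
Variables (X Y Z : finType) (P : X -> Y -> Z -> R).
Hypothesis P0 : forall x y z, 0 <= P x y z.

Definition T3 (G : X -> Y -> Z -> R) := \sum_x \sum_y \sum_z G x y z.

Lemma T3D G H : T3 (fun x y z => G x y z + H x y z) = T3 G + T3 H.
Proof.
rewrite /T3 -big_split; apply: eq_bigr => x _; rewrite -big_split.
by apply: eq_bigr => y _; rewrite -big_split.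
Qed.

Lemma T3B G H : T3 (fun x y z => G x y z - H x y z) = T3 G - T3 H.
Proof.
rewrite /T3 -sumrB; apply: eq_bigr => x _; rewrite -sumrB.
by apply: eq_bigr => y _; rewrite -sumrB.
Qed.

Lemma T3_le G H : (forall x y z, G x y z <= H x y z) -> T3 G <= T3 H.
Proof.
by move=> hGH; rewrite /T3; do 3 (apply: ler_sum => ? _).
Qed.

Let Pxy x y := \sum_z P x y z.
Let Pyz y z := \sum_x P x y z.
Let Py y := \sum_x Pxy x y.
Let Q x y z := Pxy x y * Pyz y z / Py y.

Lemma Pyz_sum y : \sum_z Pyz y z = Py y.
Proof. by rewrite /Pyz /Py /Pxy exchange_big. Qed.

Lemma gibbs :
  \sum_x \sum_y xl (\sum_z P x y z) + \sum_y \sum_z xl (\sum_x P x y z)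
  <= \sum_y xl (\sum_x \sum_z P x y z) + \sum_x \sum_y \sum_z xl (P x y z).
Proof.
have E1 : \sum_x \sum_y xl (\sum_z P x y z) = T3 (fun x y z => P x y z * ln (Pxy x y)).
  by apply: eq_bigr => x _; apply: eq_bigr => y _; rewrite /xl big_distrl.
have E2 : \sum_y \sum_z xl (\sum_x P x y z) = T3 (fun x y z => P x y z * ln (Pyz y z)).
  rewrite /T3 [RHS]exchange_big /=; apply: eq_bigr => y _.
  rewrite [RHS]exchange_big /=; apply: eq_bigr => z _; by rewrite /xl big_distrl.
have E3 : \sum_y xl (\sum_x \sum_z P x y z) = T3 (fun x y z => P x y z * ln (Py y)).
  rewrite /T3 [RHS]exchange_big /=; apply: eq_bigr => y _.
  rewrite /xl big_distrl /=; apply: eq_bigr => x _; by rewrite big_distrl.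
have E4 : \sum_x \sum_y \sum_z xl (P x y z) = T3 (fun x y z => P x y z * ln (P x y z)) by [].
have EQ : T3 (fun x y z => P x y z - Q x y z) = 0.
  rewrite T3B; apply/eqP; rewrite subr_eq0; apply/eqP.
  have -> : T3 Q = \sum_y Py y * Py y / Py y.
    rewrite /T3 [LHS]exchange_big /=; apply: eq_bigr => y _.
    transitivity ((\sum_x Pxy x y) * ((\sum_z Pyz y z) / Py y)); last first.
      by rewrite Pyz_sum mulrA.
    rewrite mulr_suml; apply: eq_bigr => x _; rewrite [X in _ * X]mulr_suml mulr_sumr.
    by apply: eq_bigr => z _; rewrite /Q mulrA.
  rewrite /T3 [LHS]exchange_big /=; apply: eq_bigr => y _.
  have -> : \sum_x \sum_z P x y z = Py y by [].
  have [->|hy] := eqVneq (Py y) 0; first by rewrite mulr0 mul0r.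
  by rewrite mulfK.
have key : forall x y z,
   P x y z * ln (Pxy x y) + P x y z * ln (Pyz y z) + (P x y z - Q x y z)
   <= P x y z * ln (Py y) + P x y z * ln (P x y z).
  move=> x y z.
  have Q0 : 0 <= Q x y z.
    have h1 : 0 <= Pxy x y by apply: sumr_ge0.
    have h2 : 0 <= Pyz y z by apply: sumr_ge0.
    have h3 : 0 <= Py y by apply: sumr_ge0 => i _; apply: sumr_ge0.
    by rewrite /Q divr_ge0 // mulr_ge0.
  have [h0|hpos] := eqVneq (P x y z) 0.
    by rewrite h0 !mul0r; lra.
  have hp : 0 < P x y z by rewrite lt0r hpos P0.
  have hPxy : P x y z <= Pxy x y by apply: sum_ge_term.
  have hPyz : P x y z <= Pyz y z by apply: (sum_ge_term (F := fun x => P x y z)).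
  have hy : Pxy x y <= Py y.
  { exact: (@sum_ge_term _ (fun x0 => Pxy x0 y) x (fun j => sumr_ge0 _ (fun k _ => P0 j y k))). }
  have pxy : 0 < Pxy x y by lra.
  have pyz : 0 < Pyz y z by lra.
  have py : 0 < Py y by lra.
  have qp : 0 < Q x y z by rewrite /Q divr_gt0 // mulr_gt0.
  have e : ln (Q x y z / P x y z) = ln (Pxy x y) + ln (Pyz y z) - ln (Py y) - ln (P x y z).
    rewrite ln_div ?posrE // /Q ln_div ?posrE ?mulr_gt0 // lnM ?posrE //.
  have := ler_wpM2l (ltW hp) (ln_le_sub1 (divr_gt0 qp hp)).
  rewrite e => h.
  have hq : P x y z * (Q x y z / P x y z) = Q x y z.
    by rewrite mulrCA mulfV ?mulr1 // gt_eqF.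
  lra.
have := T3_le key.
rewrite (T3D (fun x y z => P x y z * ln (Pxy x y) + P x y z * ln (Pyz y z)) (fun x y z => P x y z - Q x y z)).
rewrite EQ addr0 (T3D (fun x y z => P x y z * ln (Pxy x y))) (T3D (fun x y z => P x y z * ln (Py y))).
rewrite E1 E2 E3 E4; lra.
Qed.

End Gibbs.


Unset Implicit Arguments.
Section Proc.
Variable blk : blocks R A.
Hypothesis hp : stationary_process blk.

Definition p (s : seq A) : R := blk (size s) (in_tuple s).

Lemma blkE n (t : n.-tuple A) : blk n t = p t.
Proof.
case: t => s hs; rewrite /p /=; move/eqP: (hs) => e; subst n.
by have -> : Tuple hs = in_tuple s by apply: val_inj.
Qed.

Lemma p_ge0 s : 0 <= p s.
Proof. by case: hp => h _ _ _; apply: h. Qed.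

Lemma p_cons s : p s = \sum_(a : A) p (a :: s).
Proof.
case: hp => _ _ _ hst.
rewrite {1}/p (hst _ (in_tuple s)); apply: eq_bigr => a _; exact: blkE.
Qed.

Lemma p_rcons s : p s = \sum_(a : A) p (rcons s a).
Proof.
case: hp => _ _ hc _.
rewrite {1}/p (hc _ (in_tuple s)); apply: eq_bigr => a _; exact: blkE.
Qed.

Lemma p_cat_l k y : \sum_(x : k.-tuple A) p (x ++ y) = p y.
Proof.
elim: k => [|k IH]; first by rewrite (sum_tuple0 (fun s => p (s ++ y))).
rewrite (sum_tuple_cons k (fun s => p (s ++ y))) /= exchange_big /= -[RHS]IH.
by apply: eq_bigr => x _; rewrite [RHS]p_cons.
Qed.

Lemma p_cat_r k x : \sum_(y : k.-tuple A) p (x ++ y) = p x.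
Proof.
elim: k => [|k IH]; first by rewrite (sum_tuple0 (fun s => p (x ++ s))) cats0.
rewrite (sum_tuple_rcons k (fun s => p (x ++ s))) /= -[RHS]IH.
apply: eq_bigr => y _; rewrite [RHS]p_rcons.
by apply: eq_bigr => a _; rewrite rcons_cat.
Qed.

Lemma p_le_cat_r x y : p (x ++ y) <= p x.
Proof.
rewrite -(p_cat_r (size y) x).
exact: (@sum_ge_term _ (fun t : (size y).-tuple A => p (x ++ t)) (in_tuple y) (fun j => p_ge0 _)).
Qed.

Lemma p_le_cat_l x y : p (x ++ y) <= p y.
Proof.
rewrite -(p_cat_l (size x) y).
exact: (@sum_ge_term _ (fun t : (size x).-tuple A => p (t ++ y)) (in_tuple x) (fun j => p_ge0 _)).
Qed.

Definition S n := \sum_(t : n.-tuple A) xl (p t).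

Lemma HE n : block_entropy blk n = - S n / ln 2.
Proof.
rewrite /block_entropy /S mulNr mulr_suml; congr (- _); apply: eq_bigr => t _.
rewrite /xlog2x /log2 /xl blkE; case: eqP => [->|_]; first by rewrite !mul0r.
by rewrite mulrA.
Qed.

Lemma S_conv n : S n.+1 + S n.+1 <= S n + S n.+2.
Proof.
have := @gibbs A (n.-tuple A) A (fun a w b => p (a :: rcons w b)) (fun _ _ _ => p_ge0 _).
have -> : \sum_a \sum_(w : n.-tuple A) xl (\sum_b p (a :: rcons w b)) = S n.+1.
  rewrite /S (sum_tuple_cons n (fun s => xl (p s))).
  by apply: eq_bigr => a _; apply: eq_bigr => w _; rewrite [p (a :: w)]p_rcons.
have -> : \sum_(w : n.-tuple A) \sum_b xl (\sum_a p (a :: rcons w b)) = S n.+1.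
  rewrite /S (sum_tuple_rcons n (fun s => xl (p s))).
  by apply: eq_bigr => w _; apply: eq_bigr => b _; rewrite [p (rcons w b)]p_cons.
have -> : \sum_(w : n.-tuple A) xl (\sum_a \sum_b p (a :: rcons w b)) = S n.
  rewrite /S; apply: eq_bigr => w _; rewrite [p w]p_cons; congr xl.
  by apply: eq_bigr => a _; rewrite [p (a :: w)]p_rcons.
have -> : \sum_a \sum_(w : n.-tuple A) \sum_b xl (p (a :: rcons w b)) = S n.+2.
  rewrite /S (sum_tuple_cons n.+1 (fun s => xl (p s))).
  by apply: eq_bigr => a _; rewrite (sum_tuple_rcons n (fun s => xl (p (a :: s)))).
by [].
Qed.

Lemma MI_eq m : halves_mutual_info blk m = (S (m+m) - S m - S m) / ln 2.
Proof.
rewrite /halves_mutual_info /=.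
have Ex : forall x : m.-tuple A, \sum_(y' : m.-tuple A) blk (m+m) [tuple of x ++ y'] = p x.
  move=> x; rewrite -[RHS](p_cat_r m x); apply: eq_bigr => y' _; exact: blkE.
have Ey : forall y : m.-tuple A, \sum_(x' : m.-tuple A) blk (m+m) [tuple of x' ++ y] = p y.
  move=> y; rewrite -[RHS](p_cat_l m y); apply: eq_bigr => x' _; exact: blkE.
transitivity (\sum_(x : m.-tuple A) \sum_(y : m.-tuple A)
   ((xl (p (x ++ y)) - p (x ++ y) * ln (p x) - p (x ++ y) * ln (p y)) / ln 2)).
  apply: eq_bigr => x _; apply: eq_bigr => y _.
  rewrite Ex Ey blkE /=.
  have [h0|hq] := eqVneq (p (x ++ y)) 0.
    by rewrite h0 /xl !mul0r !subr0 mul0r.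

  have q0 : 0 < p (x ++ y) by rewrite lt0r hq p_ge0.
  have px : 0 < p x by apply: (lt_le_trans q0); apply: p_le_cat_r.
  have py : 0 < p y by apply: (lt_le_trans q0); apply: p_le_cat_l.
  rewrite /log2 ln_div ?posrE ?mulr_gt0 // lnM ?posrE // /xl.
  ring.
under eq_bigr => x _ do rewrite -mulr_suml.
rewrite -mulr_suml; congr (_ / _).
under eq_bigr => x _ do rewrite !sumrB.
rewrite !sumrB.
have -> : \sum_(x : m.-tuple A) \sum_(y : m.-tuple A) xl (p (x ++ y)) = S (m + m).
  by rewrite /S (sum_tuple_cat m m (fun s => xl (p s))).
have -> : \sum_(x : m.-tuple A) \sum_(y : m.-tuple A) p (x ++ y) * ln (p x) = S m.
  by apply: eq_bigr => x _; rewrite -mulr_suml p_cat_r.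
have -> : \sum_(x : m.-tuple A) \sum_(y : m.-tuple A) p (x ++ y) * ln (p y) = S m.
  by rewrite exchange_big; apply: eq_bigr => y _; rewrite -mulr_suml p_cat_l.
by [].
Qed.

End Proc.

Lemma seq_ineq (H : nat -> R) : H 0%N = 0 ->
  (forall n, H n + H n.+2 <= H n.+1 + H n.+1) ->
  forall l m, (m + m <= l.+1)%N ->
  H m + H m - H (m + m)%N <= H l.+1 - l.+1%:R * (H l.+1 - H l).
Proof.
move=> H0 hc l m hm.
pose d i := H i.+1 - H i.
have dmono : forall i j, (i <= j)%N -> d j <= d i.
  move=> i j /subnK <-; elim: (j - i)%N => [|k IH] //=.
  apply: le_trans IH; rewrite addSn /d; have := hc (k + i)%N; lra.
have Hsum : forall n, H n = \sum_(i < n) d i.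
  elim=> [|n IH]; first by rewrite big_ord0.
  rewrite big_ord_recr /= -IH /d; lra.
have Hsum2 : forall k, H (m + k)%N = H m + \sum_(i < k) d (m + i)%N.
  elim=> [|k IH]; first by rewrite big_ord0 addn0 addr0.
  rewrite addnS big_ord_recr /= addrA -IH /d; lra.
have -> : H l.+1 - H l = d l by [].
rewrite Hsum2 (Hsum m) (Hsum l.+1); clearbody d.
have key : \sum_(i < m) (d i - d (m + i)%N) <= \sum_(i < l.+1) (d i - d l).
  have hml : (m <= l.+1)%N by lia.
  rewrite (big_ord_widen l.+1 (fun i => d i - d (m + i)%N) hml).
  rewrite [X in _ <= X](bigID (fun i : 'I_l.+1 => (i < m)%N)) /=.
  rewrite -[X in X <= _]addr0; apply: lerD.
    apply: ler_sum => i him; rewrite lerD2l lerN2; apply: dmono; lia.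
  apply: sumr_ge0 => i _; rewrite subr_ge0; apply: dmono.
  by have := ltn_ord i; lia.
move: key; rewrite !sumrB sumr_const card_ord -mulr_natl; lra.
Qed.

End Aux.

Theorem proposition14 (R : realType) (A : finType) (blk : blocks R A)
    (hproc : stationary_process blk) (L : nat) (hL : (2 <= L)%N) :
  entropy_rate_est' blk L - entropy_rate_est blk L
    >= excess_entropy_est' blk L / L%:R.
Proof.
rewrite /entropy_rate_est' /entropy_rate_est /excess_entropy_est'.
have l2 : 0 < ln (2 : R) by rewrite ln_gt0 // ltr1n.
have hc : forall n, block_entropy blk n + block_entropy blk n.+2 <=
                    block_entropy blk n.+1 + block_entropy blk n.+1.
  move=> n; rewrite !HE; have := @S_conv _ _ blk hproc n.
  rewrite !mulNr -!opprD -!mulrDl lerN2 ler_pM2r ?invr_gt0 //.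
have H0 : block_entropy blk 0 = 0.
  rewrite HE /S (@sum_tuple0 R A (fun s => xl (@p R A blk s))) /xl.
  have -> : @p R A blk [::] = 1.
    case: hproc => _ h1 _ _; rewrite -h1; exact: (esym (@blkE _ _ blk 0 [tuple])).
  by rewrite ln1 mulr0 oppr0 mul0r.
have MI : forall m, halves_mutual_info blk m =
   block_entropy blk m + block_entropy blk m - block_entropy blk (m + m)%N.
  move=> m; rewrite MI_eq // !HE !mulNr !mulrBl; lra.
case: L hL => [|l] // hL.
set m := l.+1./2.
have hm : (m + m <= l.+1)%N by rewrite addnn halfK leq_subr.
have key := @seq_ineq _ _ H0 hc _ _ hm.
rewrite MI /=.
have hL0 : 0 < l.+1%:R :> R by rewrite ltr0Sn.
set X := _ - block_entropy blk (m + m)%N.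
set Y := block_entropy blk l.+1.
set Z := Y - block_entropy blk l.
have e : (Y - l.+1%:R * Z) / l.+1%:R = Y / l.+1%:R - Z.
  by rewrite mulrBl mulrAC mulfV ?mul1r // gt_eqF.
rewrite -e ler_pM2r ?invr_gt0 //.
Qed.
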